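(* Let $d\ge2$ and let $P$ be an essential pattern subgroup of $G(d)$ with $P(d-1)=G(d-1)$. Then $P$ contains $[a_1,a_{d-1}]$ and does not contain $[a_0,a_{d-1}]$ if and only if $[G(d):P]=4$.
   Context: Let $X=\{0,1\}$, $G(d)$ the automorphism group of the finite binary rooted tree of words of length $\le d$; finite sections $g(wv)=g(w)g_w(v)$; $\pi_k$ restriction to words of length $\le k$, $P(k)=\pi_k(P)$. A subgroup $P\le G(d)$ is an essential pattern group if for every $p\in P$ and $i\in\{0,1\}$ there is $q\in P$ with $\pi_{d-1}(q)=p_i$. For $0\le i\le d-1$, $a_i\in G(d)$ swaps $0^i0w$ with $0^i1w$ for all words $w$ and fixes all other words. $[h,k]=h^{-1}k^{-1}hk$. *)

(* Defs.v *)
From HB Require Import structures.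
From mathcomp Require Import all_boot all_fingroup.
Set Implicit Arguments. Unset Strict Implicit. Unset Printing Implicit Defensive.

(** Words over X = {0,1} are [seq bool] ([false] = 0, [true] = 1),
    read from left to right: [w ++ v] is the word wv. *)

Fixpoint words (d : nat) : seq (seq bool) :=
  if d is d'.+1 then
    [::] :: [seq b :: w | b <- [:: false; true], w <- words d']
  else [:: [::]].

Lemma nil_in_words d : [::] \in words d.
Proof. by case: d. Qed.

Lemma mem_cons_map (b c : bool) (s : seq bool) (l : seq (seq bool)) :
  (b :: s \in [seq c :: w | w <- l]) = (b == c) && (s \in l).
Proof.
elim: l => [|x l IH] /=; first by rewrite andbF.
by rewrite !in_cons IH andb_orr; congr (_ || _); rewrite eqseq_cons.
Qed.

Lemma mem_words d s : (s \in words d) = (size s <= d).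
Proof.
elim: d s => [|d IH] [|b s] //=.
rewrite in_cons /= !mem_cat orbF !mem_cons_map IH.
by case: b; rewrite /= ?orbF.
Qed.

(** The vertices of the finite binary rooted tree of depth d:
    the words of length <= d (a finite type). *)
Definition word (d : nat) : finType := seq_sub (words d).

Definition wroot (d : nat) : word d := SeqSub (nil_in_words d).

(** The word of length <= d with underlying sequence s (s is assumed to
    have length <= d; otherwise the root). *)
Definition mkw (d : nat) (s : seq bool) : word d := insubd (wroot d) s.

Definition wval d (w : word d) : seq bool := ssval w.

(** Parent of a vertex (the root is its own parent). *)
Definition wparent d (w : word d) : word d :=
  mkw d (take (size (wval w)).-1 (wval w)).

(** G(d): automorphisms of the rooted tree, i.e. permutations of the
    vertices commuting with the parent map (hence fixing the root and
    preserving edges). *)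
Definition G (d : nat) : {set {perm word d}} :=
  [set g : {perm word d} | [forall w, g (wparent w) == wparent (g w)]].

(** Restriction pi_k(g) to the words of length <= k (k <= d), as a map. *)
Definition restr (d k : nat) (g : {perm word d}) (w : word k) : word k :=
  mkw k (wval (g (mkw d (wval w)))).
Arguments restr {d} k g w.

Definition pattern (d : nat) (P : {set {perm word d}}) (k : nat)
  : {set {perm word k}} :=
  [set h : {perm word k} | [exists p in P, [forall w, h w == restr k p w]]].

(** The section g_x at a one-letter word x, as a map on words of length
    <= d-1:  g(x v) = g(x) g_x(v). *)
Definition section1 (d : nat) (g : {perm word d}) (x : bool)
  (v : word d.-1) : word d.-1 :=
  mkw d.-1 (drop 1 (wval (g (mkw d (x :: wval v))))).

Definition essential (d : nat) (P : {set {perm word d}}) : Prop :=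
  forall p, p \in P -> forall x : bool,
    exists2 q, q \in P & forall v : word d.-1, restr d.-1 q v = section1 p x v.

(** The map on sequences underlying a_i: swaps 0^i 0 w and 0^i 1 w. *)
Definition aseq (i : nat) (s : seq bool) : seq bool :=
  if (i < size s) && (take i s == nseq i false)
  then take i s ++ ~~ nth false s i :: drop i.+1 s
  else s.

Definition amap (d i : nat) (w : word d) : word d := mkw d (aseq i (wval w)).

Lemma size_aseq i s : size (aseq i s) = size s.
Proof.
rewrite /aseq; case: ifP => // /andP [Hi _].
by rewrite size_cat /= size_take Hi size_drop addnS -addSn subnKC.
Qed.

Lemma aseqK i : involutive (aseq i).
Proof.
move=> s; rewrite {2}/aseq; case: ifP => [/andP [Hi /eqP Ht]|H]; last by rewrite /aseq H.
have Hs : size (take i s) = i by rewrite size_take Hi.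
rewrite /aseq size_cat /= Hs take_size_cat // Ht eqxx andbT addnS ltnS leq_addr.
rewrite nth_cat size_nseq ltnn subnn /= negbK drop_cat size_nseq ltnNge leqnSn /=.
by rewrite subSnn /= drop0 -Ht -drop_nth // cat_take_drop.
Qed.

Lemma amapK d i : involutive (@amap d i).
Proof.
move=> w; apply: val_inj; rewrite /amap /mkw /wval /=.
have Hw : aseq i (ssval w) \in words d.
  by rewrite mem_words size_aseq -mem_words (ssvalP w).
rewrite (insubdK _ Hw) aseqK insubdK //; exact: ssvalP.
Qed.

Definition a (d i : nat) : {perm word d} := perm (can_inj (@amapK d i)).

(* Main.v *)
Require Import Defs.
From HB Require Import structures.
From mathcomp Require Import all_boot all_fingroup zify.
Set Implicit Arguments. Unset Strict Implicit. Unset Printing Implicit Defensive.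
Local Open Scope group_scope.

Lemma size_wval d (w : word d) : size (wval w) <= d.
Proof. by rewrite -mem_words; exact: ssvalP. Qed.

Lemma wval_mkw d s : size s <= d -> wval (mkw d s) = s.
Proof. by move=> H; rewrite /wval /mkw insubdK // mem_words. Qed.

Lemma wvalK d (w : word d) : mkw d (wval w) = w.
Proof. by apply: val_inj; rewrite /= -/(wval _) wval_mkw // size_wval. Qed.

Lemma wval_inj d : injective (@wval d).
Proof. move=> x y; exact: val_inj. Qed.

Lemma mkw_inj d s1 s2 : size s1 <= d -> size s2 <= d -> mkw d s1 = mkw d s2 -> s1 = s2.
Proof. by move=> H1 H2 E; rewrite -(wval_mkw H1) -(wval_mkw H2) E. Qed.

Lemma wval_parent d (w : word d) : wval (wparent w) = take (size (wval w)).-1 (wval w).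
Proof.
rewrite /wparent wval_mkw // size_take; case: ifP => _ //; [exact: leq_trans (leq_pred _) (size_wval w)|exact: size_wval].
Qed.

Lemma size_parent d (w : word d) : size (wval (wparent w)) = (size (wval w)).-1.
Proof. by rewrite wval_parent size_take; case: (size _) => //= n; rewrite leqnn. Qed.

Lemma inG d (g : {perm word d}) : (g \in G d) = [forall w, g (wparent w) == wparent (g w)].
Proof. by rewrite inE. Qed.

Lemma inGP d (g : {perm word d}) : reflect (forall w, g (wparent w) = wparent (g w)) (g \in G d).
Proof. rewrite inG; apply: (iffP forallP) => H w; [exact/eqP/H| exact/eqP/H]. Qed.

Lemma G_group_set d : group_set (G d).
Proof.
apply/group_setP; split; first by apply/inGP => w; rewrite !perm1.
move=> x y /inGP Hx /inGP Hy; apply/inGP => w; by rewrite !permM Hx Hy.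
Qed.

Canonical G_group d := Group (G_group_set d).

Lemma parent_fix d (w : word d) : wparent w = w -> wval w = [::].
Proof.
move=> E; have := congr1 (fun x => size (wval x)) E; rewrite size_parent.
case: (wval w) => //= b s H; exfalso; move: H; rewrite /=; by elim: (size s) => // k IH [] /IH.
Qed.

Lemma G_size d (g : {perm word d}) w : g \in G d -> size (wval (g w)) = size (wval w).
Proof.
move=> /inGP Hg.
have Hr : g (wroot d) = wroot d.
  have Hp : wparent (wroot d) = wroot d by apply: val_inj; rewrite /= -/(wval _) wval_parent.
  apply: wval_inj; rewrite [wval (wroot d)]/=; apply: parent_fix.
  by rewrite -Hg Hp.
move Hm : (size (wval w)) => m; elim: m w Hm => [|m IH] w Hm.
  have -> : w = wroot d by apply: wval_inj; apply/eqP; rewrite -size_eq0 Hm.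
  by rewrite Hr.
have Hpw : size (wval (wparent w)) = m by rewrite size_parent Hm.
have := IH _ Hpw; rewrite Hg size_parent.
case E: (size (wval (g w))) => [|k] /= Hk; last by rewrite Hk.
subst m; exfalso.
have : g w = wroot d by apply: wval_inj; apply/eqP; rewrite -size_eq0 E.
rewrite -Hr => /perm_inj Ew; by move: Hm; rewrite Ew.
Qed.

Fixpoint pf (phi : seq bool -> bool) (s : seq bool) : seq bool :=
  if s is b :: s' then (b (+) phi [::]) :: pf (fun w => phi (b :: w)) s' else [::].

Lemma size_pf phi s : size (pf phi s) = size s.
Proof. by elim: s phi => //= b s IH phi; rewrite IH. Qed.

Lemma take_pf phi k s : take k (pf phi s) = pf phi (take k s).
Proof. by elim: s phi k => //= b s IH phi [|k] //=; rewrite IH. Qed.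

Lemma nth_pf phi s i : i < size s -> nth false (pf phi s) i = nth false s i (+) phi (take i s).
Proof.
elim: s phi i => //= b s IH phi [|i] //= Hi.
by rewrite IH.
Qed.

Lemma pf_inv (psi chi : seq bool -> bool) :
  (forall w, psi (pf chi w) = chi w) -> forall s, pf psi (pf chi s) = s.
Proof.
move=> H s; elim: s psi chi H => //= b s IH psi chi H.
have H0 : psi [::] = chi [::] := H [::].
have {}H0 : addb (addb b (chi [::])) (psi [::]) = b by rewrite H0; case: b; case: (chi [::]).
rewrite H0; congr (_ :: _).
apply: IH => w; by rewrite /= -(H (b :: w)) /=.
Qed.

Lemma pf_inj phi : injective (pf phi).
Proof.
move=> s1 s2; elim: s1 s2 phi => [|b1 s1 IH] [|b2 s2] phi //= [] E1 E2.
have Eb : b1 = b2 by clear E2 IH; move: E1; case: b1; case: b2; case: (phi [::]).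
subst b2; by rewrite (IH _ _ E2).
Qed.

Lemma pf_eq phi s t : size t = size s ->
  (forall i, i < size s -> nth false t i = nth false s i (+) phi (take i s)) -> pf phi s = t.
Proof.
move=> Hs H; apply: (eq_from_nth (x0 := false)); first by rewrite size_pf.
by move=> i; rewrite size_pf => Hi; rewrite nth_pf // H.
Qed.

Definition invol (phi : seq bool -> bool) := forall w, phi (pf phi w) = phi w.

Lemma pfK phi : invol phi -> involutive (pf phi).
Proof. by move=> H s; apply: pf_inv. Qed.

Lemma prefix_pf phi y u : invol phi -> size y <= size u ->
  prefix y (pf phi u) = prefix (pf phi y) u.
Proof.
move=> Hi Hs; rewrite !prefixE size_pf take_pf.
have H1 : (pf phi (take (size y) u) = y) <-> (take (size y) u = pf phi y).
  split=> E; first by rewrite -[in RHS]E pfK.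
  by rewrite E pfK.
case: (pf phi (take (size y) u) =P y) => E1; case: (take (size y) u =P pf phi y) => E2 //.
  by case: E2; apply/H1.
by case: E1; apply/H1.
Qed.

Definition pam d phi (w : word d) : word d := mkw d (pf phi (wval w)).

Lemma pam_inj d phi : injective (@pam d phi).
Proof.
move=> x y /mkw_inj; rewrite !size_pf !size_wval => /(_ isT isT) /pf_inj.
exact: wval_inj.
Qed.

Definition pa d phi : {perm word d} := perm (@pam_inj d phi).

Lemma pa_val d phi (w : word d) : wval (pa d phi w) = pf phi (wval w).
Proof. by rewrite permE /pam wval_mkw // size_pf size_wval. Qed.

Lemma pa_G d phi : pa d phi \in G d.
Proof.
apply/inGP => w; apply: wval_inj.
by rewrite pa_val !wval_parent pa_val size_pf take_pf.
Qed.

Definition child d (b : bool) (v : word d) : word d := mkw d (rcons (wval v) b).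

Lemma wval_child d b (v : word d) : size (wval v) < d -> wval (child b v) = rcons (wval v) b.
Proof. by move=> H; rewrite wval_mkw // size_rcons. Qed.

Lemma child_eq d b c (v : word d) : size (wval v) < d -> (child b v == child c v) = (b == c).
Proof.
move=> H; apply/eqP/eqP => [E|->] //.
have := congr1 (@wval d) E; rewrite !wval_child // => /eqP; rewrite eqseq_rcons.
by case/andP=> _ /eqP.
Qed.

Lemma parent_child d b (v : word d) : size (wval v) < d -> wparent (child b v) = v.
Proof.
move=> H; apply: wval_inj; rewrite wval_parent wval_child // size_rcons /=.
by rewrite -cats1 take_size_cat //.
Qed.

Lemma child_of d (x : word d) : 0 < size (wval x) ->
  x = child (last false (wval x)) (wparent x).
Proof.
move=> H; apply: wval_inj; rewrite wval_child; last first.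
  by rewrite size_parent prednK // size_wval.
rewrite wval_parent; case/lastP: (wval x) H => //= t z _.
by rewrite size_rcons /= last_rcons -cats1 take_size_cat // cats1.
Qed.

Lemma G_child d (g : {perm word d}) b (v : word d) : g \in G d -> size (wval v) < d ->
  g (child b v) = child (last false (wval (g (child b v)))) (g v).
Proof.
move=> Hg Hv; rewrite {1}(child_of (x := g (child b v))).
  by move/inGP: Hg => <-; rewrite parent_child.
by rewrite G_size // wval_child // size_rcons.
Qed.

Definition K d : {set {perm word d}} :=
  [set k in G d | [forall w : word d, (size (wval w) < d) ==> (k w == w)]].

Lemma inKP d (k : {perm word d}) :
  reflect (k \in G d /\ forall w, size (wval w) < d -> k w = w) (k \in K d).
Proof.
rewrite [k \in K d]inE; apply: (iffP andP) => [[H1 /forallP H2]|[H1 H2]]; split => //.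
  by move=> w Hw; apply/eqP; move: (H2 w); rewrite Hw.
by apply/forallP => w; apply/implyP => Hw; rewrite H2.
Qed.

Lemma K_group_set d : group_set (K d).
Proof.
apply/group_setP; split; first by apply/inKP; split; [exact: group1 | move=> w _; rewrite perm1].
move=> x y /inKP [Hx Hx'] /inKP [Hy Hy']; apply/inKP; split; first exact: groupM.
by move=> w Hw; rewrite permM Hx' // Hy'.
Qed.

Canonical K_group d := Group (K_group_set d).

Lemma K_sub d : K d \subset G d.
Proof. by apply/subsetP => k /inKP []. Qed.

Definition fl d (k : {perm word d}) (v : word d) : bool := k (child false v) != child false v.

Lemma K_child d (k : {perm word d}) b (v : word d) : k \in K d -> size (wval v) < d ->
  k (child b v) = child (b (+) fl k v) v.
Proof.
move=> /inKP [HG HK] Hv.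
have E : forall c, exists c', k (child c v) = child c' v.
  by move=> c; eexists; rewrite (G_child c HG Hv) (HK v Hv).
case: b => /=.
  have [c1 E1] := E true; have [c0 E0] := E false.
  have Hne : k (child true v) != k (child false v) by rewrite (inj_eq perm_inj) child_eq.
  rewrite /fl E1 E0 in Hne *; rewrite !child_eq // in Hne *.
  by move: Hne; case: c1 {E1}; case: c0 {E0}.
have [c0 E0] := E false; rewrite /fl E0 child_eq //; by case: c0 {E0}.
Qed.

Lemma fl_child d (k : {perm word d}) b (v : word d) : k \in K d -> size (wval v) < d ->
  (k (child b v) != child b v) = fl k v.
Proof. by move=> Hk Hv; rewrite K_child // child_eq //; case: b; case: (fl k v). Qed.

Lemma fl_mul d (k1 k2 : {perm word d}) (v : word d) : k1 \in K d -> k2 \in K d ->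
  size (wval v) < d -> fl (k1 * k2) v = fl k1 v (+) fl k2 v.
Proof.
move=> H1 H2 Hv; rewrite {1}/fl permM K_child // K_child // child_eq //.
by case: (fl k1 v); case: (fl k2 v).
Qed.

Lemma fl1 d (v : word d) : fl 1 v = false.
Proof. by rewrite /fl perm1 eqxx. Qed.

Lemma K_eq d (k1 k2 : {perm word d}) : 0 < d -> k1 \in K d -> k2 \in K d ->
  (forall v : word d, size (wval v) < d -> fl k1 v = fl k2 v) -> k1 = k2.
Proof.
move=> Hd H1 H2 E; apply/permP => x.
case: (ltnP (size (wval x)) d) => Hx.
  by move/inKP: H1 => [_ ->] //; move/inKP: H2 => [_ ->].
have Hx0 : 0 < size (wval x) by apply: leq_trans Hx.
have Hp : size (wval (wparent x)) < d.
  rewrite size_parent; have := size_wval x; case: (size _) Hx0 => //= m _ Hm //.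
rewrite (child_of Hx0) !K_child // E //.
Qed.

Lemma fl_inv d (k : {perm word d}) (v : word d) : k \in K d -> size (wval v) < d ->
  fl k^-1 v = fl k v.
Proof.
move=> Hk Hv; have Hk' : k^-1 \in K d by rewrite groupV.
have := fl_mul Hk Hk' Hv; rewrite mulgV fl1 => /esym.
by case: (fl k v); case: (fl k^-1 v).
Qed.

Lemma K_comm d (k1 k2 : {perm word d}) : 0 < d -> k1 \in K d -> k2 \in K d -> k1 * k2 = k2 * k1.
Proof.
move=> Hd H1 H2; apply: K_eq => //; try exact: groupM.
by move=> v Hv; rewrite !fl_mul // addbC.
Qed.

Lemma K_conj d (k h : {perm word d}) : k \in K d -> h \in G d -> k ^ h \in K d.
Proof.
move=> /inKP [Hk Hk'] Hh; apply/inKP; split; first by rewrite groupJ.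
move=> w Hw; rewrite conjgE !permM Hk'; first by rewrite -permM mulVg perm1.
by rewrite G_size ?groupV.
Qed.

Lemma fl_conj d (k h : {perm word d}) (v : word d) : k \in K d -> h \in G d ->
  size (wval v) < d -> fl (k ^ h) v = fl k (h^-1 v).
Proof.
move=> Hk Hh Hv.
have Hh' : h^-1 \in G d by rewrite groupV.
have Hu : size (wval (h^-1 v)) < d by rewrite G_size.
rewrite {1}/fl conjgE !permM.
rewrite (G_child false Hh' Hv); set c := last false _.
rewrite K_child //.
have E : h (child c (h^-1 v)) = child false v.
  by rewrite -(G_child false Hh' Hv) -permM mulVg perm1.
case: (fl k (h^-1 v)); rewrite ?addbF ?E ?eqxx //.
apply/negP => /eqP; rewrite -[X in _ = X]E => /perm_inj /eqP; rewrite child_eq // addbT; by case: (c).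
Qed.

Definition par d (k : {perm word d}) (y : seq bool) : bool :=
  \big[addb/false]_(v : word d | (size (wval v) == d.-1) && prefix y (wval v)) fl k v.

Lemma lt_n d (v : word d) : 0 < d -> size (wval v) = d.-1 -> size (wval v) < d.
Proof. by move=> Hd ->; rewrite prednK. Qed.

Lemma par_mul d (k1 k2 : {perm word d}) y : 0 < d -> k1 \in K d -> k2 \in K d ->
  par (k1 * k2) y = par k1 y (+) par k2 y.
Proof.
move=> Hd H1 H2; rewrite /par -big_split /=; apply: eq_bigr => v /andP [/eqP Hv _].
by apply: fl_mul => //; apply: lt_n.
Qed.

Lemma par_inv d (k : {perm word d}) y : 0 < d -> k \in K d -> par k^-1 y = par k y.
Proof.
move=> Hd H; rewrite /par; apply: eq_bigr => v /andP [/eqP Hv _].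
by apply: fl_inv => //; apply: lt_n.
Qed.

Lemma par1 d y : par (1 : {perm word d}) y = false.
Proof. by rewrite /par big1 // => v _; rewrite fl1. Qed.

Lemma par_conj_pa d (k : {perm word d}) phi y : 0 < d -> k \in K d -> invol phi ->
  size y <= d.-1 -> par (k ^ pa d phi) y = par k (pf phi y).
Proof.
move=> Hd Hk Hi Hy; rewrite /par (reindex_inj (h := pa d phi) perm_inj) /=.
apply: eq_big => [u|u /andP [/eqP Hu _]].
  rewrite pa_val size_pf; case: eqP => //= Hu.
  by rewrite prefix_pf // Hu.
rewrite fl_conj ?permK ?pa_G //; exact: lt_n.
Qed.

Lemma prefix_rcons y s b : size y < size s ->
  prefix (rcons y b) s = prefix y s && (nth false s (size y) == b).
Proof.
move=> H; rewrite !prefixE size_rcons (take_nth false H) eqseq_rcons.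
done.
Qed.

Lemma par_split d (k : {perm word d}) y : size y < d.-1 ->
  par k y = par k (rcons y false) (+) par k (rcons y true).
Proof.
move=> Hy; rewrite /par (bigID (fun v : word d => nth false (wval v) (size y))) /= addbC.
congr (_ (+) _); apply: eq_bigl => v; case: eqP => //= Hv;
  rewrite prefix_rcons ?Hv //; by case: (nth false _ _); rewrite ?andbT ?andbF.
Qed.

Lemma par_leaf d (k : {perm word d}) y : size y = d.-1 -> par k y = fl k (mkw d y).
Proof.
move=> Hy; rewrite /par (big_pred1 (mkw d y)) // => v /=.
apply/andP/eqP => [[/eqP Hv Hp]|->].
  apply: wval_inj; rewrite wval_mkw ?Hy ?leq_pred //.
  by move: Hp; rewrite prefixE Hy -Hv take_size => /eqP.
by rewrite wval_mkw ?Hy ?leq_pred // eqxx prefix_refl.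
Qed.

Lemma par_ind d (u : seq bool) y : size u = d.-1 -> size y <= d.-1 ->
  \big[addb/false]_(v : word d | (size (wval v) == d.-1) && prefix y (wval v)) (wval v == u)
  = prefix y u.
Proof.
move=> Hu Hy; case Hp: (prefix y u).
  rewrite (bigD1 (mkw d u)) /=; last by rewrite wval_mkw ?Hu ?leq_pred // eqxx.
  rewrite wval_mkw ?Hu ?leq_pred // eqxx big1 // => v /andP [_ Hv].
  apply/negbTE; apply: contra Hv => /eqP E; apply/eqP; apply: wval_inj.
  by rewrite wval_mkw ?E ?Hu ?leq_pred.
rewrite big1 // => v /andP [_ Hv]; apply/negbTE; apply/eqP => E.
by move: Hv Hp; rewrite E => ->.
Qed.

Definition psi (z : seq bool) : seq bool -> bool := fun w => w == z.

Lemma neq_size (s t : seq bool) : size s != size t -> (s == t) = false.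
Proof. by move=> H; apply/negbTE; apply: contra H => /eqP ->. Qed.

Lemma pf_psi_small z w : size w <= size z -> pf (psi z) w = w.
Proof.
move=> H; apply: pf_eq => // i Hi; rewrite /psi neq_size ?addbF //.
rewrite size_takel ?(ltnW Hi) // neq_ltn; apply/orP; left; exact: leq_trans Hi H.
Qed.

Lemma psi_invol z : invol (psi z).
Proof.
move=> w; rewrite /psi; case: (leqP (size w) (size z)) => H; first by rewrite pf_psi_small.
by rewrite !neq_size // ?size_pf neq_ltn H orbT.
Qed.

Lemma pf_psi_nprefix z w : ~~ prefix z w -> pf (psi z) w = w.
Proof.
move=> Hp; apply: pf_eq => // i Hi; rewrite /psi.
case E: (take i w == z); last by rewrite addbF.
exfalso; move: Hp; rewrite prefixE; move/eqP: E => E.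
by rewrite -E size_takel ?(ltnW Hi) // E eqxx.
Qed.

Lemma pf_psi_rcons z b : pf (psi z) (rcons z b) = rcons z (~~ b).
Proof.
apply: pf_eq; first by rewrite !size_rcons.
move=> i; rewrite size_rcons ltnS => Hi; rewrite !nth_rcons /psi.
case: ltnP => Hi'.
  by rewrite neq_size ?addbF // size_takel ?size_rcons ?(ltnW (leq_trans Hi' (leqnSn _))) // neq_ltn Hi'.
have -> : i = size z by apply/eqP; rewrite eqn_leq Hi Hi'.
by rewrite eqxx -cats1 take_size_cat // eqxx addbT.
Qed.

Definition phiX (z z' : seq bool) : seq bool -> bool :=
  fun w => nth false z (size w) (+) nth false z' (size w).

Lemma phiX_invol z z' : invol (phiX z z').
Proof. by move=> w; rewrite /phiX size_pf. Qed.

Lemma pf_phiX z z' : size z = size z' -> pf (phiX z z') z = z'.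
Proof.
move=> H; apply: pf_eq => // i Hi; rewrite /phiX size_takel ?(ltnW Hi) //.
by rewrite addbA addbb.
Qed.

Lemma aseq_pf i s : aseq i s = pf (psi (nseq i false)) s.
Proof.
rewrite /aseq; case: ifP => [/andP [Hi /eqP Ht]|Hn].
  have Es : take i s ++ ~~ nth false s i :: drop i.+1 s = set_nth false s i (~~ nth false s i).
    by rewrite set_nthE Hi.
  rewrite Es; symmetry; apply: pf_eq.
    by rewrite size_set_nth; apply/maxn_idPr.
  move=> k Hk; rewrite nth_set_nth /= /psi.
  case: eqP => [->|Hki]; first by rewrite Ht eqxx addbT.
  by rewrite neq_size ?addbF // size_takel ?(ltnW Hk) // size_nseq; apply/eqP.
symmetry; apply: pf_eq => // k Hk; rewrite /psi.
case E: (take k s == nseq i false); last by rewrite addbF.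
exfalso; move/eqP: E => E.
have Hki : k = i by rewrite -(size_nseq i false) -E size_takel ?(ltnW Hk).
by subst k; rewrite Hk -E eqxx in Hn.
Qed.

Lemma a_pa d i : a d i = pa d (psi (nseq i false)).
Proof.
apply/permP => w; apply: wval_inj; rewrite pa_val /a permE /amap wval_mkw.
  by rewrite aseq_pf.
by rewrite size_aseq size_wval.
Qed.

Definition normK d (N : {group {perm word d}}) :=
  N \subset K d /\ forall x h, x \in N -> h \in G d -> x ^ h \in N.

Definition Q d (N : {group {perm word d}}) j :=
  forall k, k \in K d -> (forall y : seq bool, size y = j -> par k y = false) -> k \in N.

Lemma fl_small d (k : {perm word d}) v : k \in K d -> size (wval v) < d.-1 -> fl k v = false.
Proof.
move=> /inKP [_ Hk] Hv; rewrite /fl Hk ?eqxx //.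
rewrite wval_child ?size_rcons //; last by apply: leq_trans Hv (leq_pred _).
by move: Hv; case: d {k Hk} v => //= n v; rewrite ltnS.
Qed.

Lemma Q_base d (N : {group {perm word d}}) : 0 < d -> Q N d.-1.
Proof.
move=> Hd k Hk H.
have -> : k = 1; last exact: group1.
apply: (K_eq Hd Hk (group1 (K_group d))).
move=> v Hv; rewrite fl1.
case: (ltnP (size (wval v)) d.-1) => Hv'; first exact: fl_small.
have Hs : size (wval v) = d.-1 by apply/eqP; rewrite eqn_leq Hv' andbT -ltnS prednK.
by rewrite -(H _ Hs) par_leaf // wvalK.
Qed.

Lemma Gen1 d (N : {group {perm word d}}) f z : 0 < d -> normK N -> f \in N ->
  size z < d.-1 -> par f z = true ->
  exists2 f', f' \in N & forall y, size y = (size z).+1 -> par f' y = prefix z y.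
Proof.
move=> Hd [HNK HNJ] Hf Hz Hp.
have HfK : f \in K d by apply: (subsetP HNK).
exists (f^-1 * f ^ pa d (psi z)); first by rewrite groupM ?groupV ?HNJ ?pa_G.
move=> y Hy.
rewrite par_mul ?groupV ?K_conj ?pa_G // par_inv // par_conj_pa //; last 2 first.
  exact: psi_invol.
  by rewrite Hy.
case Hpz: (prefix z y).
  have Ey : y = rcons z (nth false y (size z)).
    move: Hpz; rewrite prefixE => /eqP Ht.
    by rewrite -[in LHS](take_size y) Hy (take_nth false) ?Hy // Ht.
  rewrite Ey pf_psi_rcons.
  have := par_split f Hz; rewrite Hp.
  by case: (nth false y (size z)) => /=; case: (par f (rcons z false)); case: (par f (rcons z true)).
by rewrite pf_psi_nprefix ?Hpz // addbb.
Qed.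

Definition bad d j (k : {perm word d}) :=
  [set w : word d | (size (wval w) == j) && par k (rcons (wval w) false)].

Lemma prefix_rcons_same (z y : seq bool) b : size z = size y -> prefix z (rcons y b) = (y == z).
Proof. by move=> H; rewrite prefixE -cats1 take_size_cat. Qed.

Lemma Gen2 d (N : {group {perm word d}}) j f' z : 0 < d -> normK N -> j < d.-1 ->
  Q N j.+1 -> f' \in N -> size z = j ->
  (forall y, size y = j.+1 -> par f' y = prefix z y) -> Q N j.
Proof.
move=> Hd [HNK HNJ] Hj HQ Hf Hz Hf'.
have Hf'K : f' \in K d by apply: (subsetP HNK).
pose g z' := f' ^ pa d (phiX z z').
have HgN : forall z', g z' \in N by move=> z'; rewrite HNJ ?pa_G.
have HgK : forall z', g z' \in K d by move=> z'; apply: (subsetP HNK).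
have Hgp : forall z' y, size z' = j -> size y = j.+1 -> par (g z') y = prefix z' y.
  move=> z' y Hz' Hy; rewrite /g par_conj_pa //; last 2 first.
    exact: phiX_invol.
    by rewrite Hy.
  rewrite Hf' ?size_pf // prefix_pf; last 2 first.
    exact: phiX_invol.
    by rewrite Hz Hy.
  by rewrite pf_phiX // Hz.
have Hg0 : forall z' y, size z' = j -> size y = j -> par (g z') y = false.
  move=> z' y Hz' Hy; rewrite par_split ?Hy // !Hgp ?size_rcons ?Hy //.
  by rewrite !prefix_rcons_same ?Hy // addbb.
have Hbase : forall k, k \in K d -> (forall y, size y = j -> par k y = false) ->
    bad j k = set0 -> k \in N.
  move=> k Hk Hy Hb; apply: HQ => // y Hy1.
  have Ht : size (take j y) = j by rewrite size_takel // Hy1.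
  have Ey : y = rcons (take j y) (nth false y j).
    by rewrite -take_nth ?Hy1 // -Hy1 take_size.
  have Hw : par k (rcons (take j y) false) = false.
    apply/negP => Hp.
    have : mkw d (take j y) \in bad j k.
      rewrite inE wval_mkw ?Ht ?eqxx //=; lia.
    by rewrite Hb inE.
  rewrite Ey; case: (nth false y j) => //.
  have := par_split k (y := take j y); rewrite Ht Hy // Hw => /(_ Hj).
  by case: (par k (rcons _ true)).
suff H : forall m k, k \in K d -> (forall y, size y = j -> par k y = false) ->
    #|bad j k| <= m -> k \in N.
  by move=> k Hk Hy; apply: (H _ k Hk Hy (leqnn _)).
elim=> [|m IH] k Hk Hy Hm.
  apply: Hbase => //; apply/eqP; rewrite -cards_eq0; by move: Hm; rewrite leqn0.
case: (set_0Vmem (bad j k)) => [Hb|[w Hw]]; first exact: Hbase.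
have Hw' := Hw; move: Hw'; rewrite inE => /andP [/eqP Hws Hwp].
pose k' := k * g (wval w).
have Hk'K : k' \in K d by rewrite groupM.
have Hk'y : forall y, size y = j -> par k' y = false.
  by move=> y Hy'; rewrite par_mul // Hy // Hg0.
have Hbad : bad j k' \subset bad j k :\ w.
  apply/subsetP => w2; rewrite !inE => /andP [/eqP Hs2 Hp2].
  move: Hp2; rewrite par_mul // Hgp ?size_rcons ?Hs2 // prefix_rcons_same ?Hs2 //.
  case: eqP => [E|E]; first by move/wval_inj: E => ->; rewrite Hwp.
  rewrite addbF => ->; rewrite eqxx andbT andbT.
  by apply/eqP => E2; apply: E; rewrite E2.
have Hcard : #|bad j k'| <= m.
  have := subset_leq_card Hbad; rewrite (cardsD1 w (bad j k)) Hw in Hm.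
  move=> H1; apply: leq_trans H1 _; by move: Hm; rewrite add1n ltnS.
have := IH k' Hk'K Hk'y Hcard.
have -> : k = k' * (g (wval w))^-1 by rewrite /k' -mulgA mulgV mulg1.
by move=> H1; rewrite groupM ?groupV.
Qed.

Lemma Desc d (N : {group {perm word d}}) : 1 < d -> normK N ->
  (forall j, 0 < j -> j < d.-1 -> exists2 f', f' \in N &
     exists2 z, size z = j & forall y, size y = j.+1 -> par f' y = prefix z y) ->
  Q N 1.
Proof.
move=> Hd HN W.
have Hd0 : 0 < d by lia.
suff H : forall i, i < d.-1 -> Q N (d.-1 - i).
  have := H (d.-1 - 1)%N ltac:(lia).
  by have -> : (d.-1 - (d.-1 - 1) = 1)%N by lia.
elim=> [|i IH] Hi; first by rewrite subn0; exact: Q_base.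
have [f' Hf' [z Hz Hfz]] := W (d.-1 - i.+1) ltac:(lia) ltac:(lia).
apply: (Gen2 Hd0 HN _ _ Hf' Hz Hfz); first lia.
have -> : (d.-1 - i.+1).+1 = d.-1 - i by lia.
apply: IH; lia.
Qed.

Definition an d := a d d.-1.

Lemma a_G d i : a d i \in G d.
Proof. by rewrite a_pa pa_G. Qed.

Lemma an_K d : an d \in K d.
Proof.
apply/inKP; split; first exact: a_G.
move=> w Hw; apply: wval_inj; rewrite /an a_pa pa_val pf_psi_small // size_nseq.
lia.
Qed.

Lemma fl_an d (v : word d) : 0 < d -> size (wval v) = d.-1 ->
  fl (an d) v = (wval v == nseq d.-1 false).
Proof.
move=> Hd Hv; have Hv' : size (wval v) < d by apply: lt_n.
rewrite /fl; have Hc : size (rcons (wval v) false) <= d by rewrite size_rcons.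
case E: (wval v == nseq d.-1 false).
  apply/negP => /eqP E2; have := congr1 (@wval d) E2.
  rewrite /an a_pa pa_val wval_child // (eqP E) pf_psi_rcons => /eqP.
  by rewrite eqseq_rcons andbF.
apply/negbF/eqP; apply: wval_inj; rewrite /an a_pa pa_val wval_child //.
rewrite pf_psi_nprefix // prefix_rcons_same ?E // size_nseq //.
Qed.

Lemma par_an d y : 0 < d -> size y <= d.-1 -> par (an d) y = prefix y (nseq d.-1 false).
Proof.
move=> Hd Hy; rewrite /par -(@par_ind d (nseq d.-1 false) y) ?size_nseq //.
by apply: eq_bigr => v /andP [/eqP Hv _]; rewrite fl_an.
Qed.

Lemma par_conj_a d i (k : {perm word d}) y : 0 < d -> k \in K d -> size y <= d.-1 ->
  par (k ^ a d i) y = par k (pf (psi (nseq i false)) y).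
Proof. by move=> Hd Hk Hy; rewrite a_pa par_conj_pa //; exact: psi_invol. Qed.

Lemma prefix1 n (b : bool) : 0 < n -> prefix [:: b] (nseq n false) = ~~ b.
Proof. case: n => [|n] // _. rewrite prefixE /= take0 eqseq_cons andbT. by case: b. Qed.

Lemma pf_psi_nil (b : bool) : pf (psi [::]) [:: b] = [:: ~~ b].
Proof. exact: (pf_psi_rcons [::] b). Qed.

Definition c0 d := [~ a d 0, an d].
Definition c1 d := [~ a d 1, an d].

Lemma c0_K d : c0 d \in K d.
Proof. by rewrite /c0 commgEr groupM ?K_conj ?groupV ?an_K ?a_G. Qed.

Lemma c1_K d : c1 d \in K d.
Proof. by rewrite /c1 commgEr groupM ?K_conj ?groupV ?an_K ?a_G. Qed.

Lemma par_c d i y : 0 < d -> size y <= d.-1 ->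
  par [~ a d i, an d] y = prefix (pf (psi (nseq i false)) y) (nseq d.-1 false) (+)
                          prefix y (nseq d.-1 false).
Proof.
move=> Hd Hy; rewrite commgEr par_mul ?K_conj ?groupV ?an_K ?a_G //.
rewrite par_conj_a ?groupV ?an_K // par_inv ?an_K // !par_an // size_pf //.
Qed.

Lemma par_c0 d (b : bool) : 1 < d -> par (c0 d) [:: b] = true.
Proof.
move=> Hd; rewrite /c0 par_c; try (simpl; lia).
change (nseq 0 false) with (@nil bool).
rewrite pf_psi_nil !prefix1; try lia.
Qed.

Lemma par_c1 d (b : bool) : 1 < d -> par (c1 d) [:: b] = false.
Proof.
move=> Hd; rewrite /c1 par_c; try (simpl; lia).
by rewrite pf_psi_small // addbb.
Qed.

Lemma prefix_nth (s t : seq bool) i : prefix s t -> i < size s -> nth false s i = nth false t i.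
Proof. rewrite prefixE => E Hi. have E2 : take (size s) t = s by apply/eqP. by rewrite -E2 nth_take. Qed.

Lemma par_c1_2 d y : 2 < d -> size y = 2 -> par (c1 d) y = prefix [:: false] y.
Proof.
move=> Hd Hy; rewrite /c1 par_c; try lia.
case: y Hy => [|b1 [|b2 [|]]] //= _.
have -> : nseq d.-1 false = [:: false, false & nseq (d - 3) false].
  by case: d Hd => [|[|[|d]]] // _; rewrite !subSS subn0.
rewrite !prefix_cons !prefix0s /psi. by case: b1; case: b2.
Qed.

Lemma par_c1_0j d j : 2 <= j -> j < d.-1 -> par (c1 d) (nseq j false) = true.
Proof.
move=> Hj Hjd; rewrite /c1 par_c ?size_nseq; try lia.
have -> : prefix (nseq j false) (nseq d.-1 false).
  rewrite prefixE size_nseq take_nseq ?eqxx //; lia.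
case E: (prefix (pf (psi (nseq 1 false)) (nseq j false)) (nseq d.-1 false)) => //.
have := prefix_nth (i:=1%N) E; rewrite size_pf size_nseq nth_pf ?size_nseq; try lia.
move/(_ Hj); rewrite !nth_nseq Hj (ltn_trans Hj Hjd) /psi take_nseq ?eqxx //; lia.
Qed.

Definition x1 d := an d ^ a d 0.

Lemma x1_K d : x1 d \in K d.
Proof. by rewrite /x1 K_conj ?an_K ?a_G. Qed.

Lemma par_an1 d (b : bool) : 1 < d -> par (an d) [:: b] = ~~ b.
Proof. move=> Hd; rewrite par_an ?prefix1 //=; lia. Qed.

Lemma par_x1 d (b : bool) : 1 < d -> par (x1 d) [:: b] = b.
Proof.
move=> Hd; rewrite /x1 par_conj_a ?an_K //=; try lia.
rewrite /psi eqxx addbT par_an1 ?negbK //.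
Qed.

Lemma par_exp d (k : {perm word d}) (b : bool) y : k \in K d ->
  par (k ^+ b) y = b && par k y.
Proof. by case: b => _ /=; rewrite ?expg1 ?expg0 ?par1. Qed.

Lemma fl_exp d (k : {perm word d}) (b : bool) v : fl (k ^+ b) v = b && fl k v.
Proof. by case: b; rewrite /= ?expg1 ?expg0 ?fl1. Qed.

Definition ee d (b0 b1 : bool) := an d ^+ b0 * x1 d ^+ b1.

Lemma ee_K d b0 b1 : ee d b0 b1 \in K d.
Proof. by rewrite /ee groupM ?groupX ?an_K ?x1_K. Qed.

Lemma par_ee d b0 b1 (b : bool) : 1 < d -> par (ee d b0 b1) [:: b] = if b then b1 else b0.
Proof.
move=> Hd; rewrite /ee par_mul ?groupX ?an_K ?x1_K //; try lia.
rewrite !par_exp ?an_K ?x1_K // par_an1 // par_x1 //.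
by case: b; case: b0; case: b1.
Qed.

Lemma ee_mul d b0 b1 c0 c1 : 1 < d ->
  ee d (b0 (+) c0) (b1 (+) c1) = ee d b0 b1 * ee d c0 c1.
Proof.
move=> Hd; apply: K_eq; [lia | exact: ee_K | by rewrite groupM ?ee_K | ].
move=> v Hv; rewrite !fl_mul ?groupX ?ee_K ?an_K ?x1_K // !fl_exp.
by case: b0; case: b1; case: c0; case: c1; case: (fl (an d) v); case: (fl (x1 d) v).
Qed.

Definition phiK d (k : {perm word d}) := ee d (par k [:: false]) (par k [:: true]).

Lemma phiK_morph d : 1 < d -> {in K d &, {morph phiK (d:=d) : x y / x * y}}.
Proof.
move=> Hd x y Hx Hy; rewrite /phiK !par_mul //; try lia.
by rewrite ee_mul.
Qed.

Definition phiM d (Hd : 1 < d) : {morphism K d >-> {perm word d}} := Morphism (phiK_morph Hd).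

Lemma ee_inj d b0 b1 c0 c1 : 1 < d -> ee d b0 b1 = ee d c0 c1 -> b0 = c0 /\ b1 = c1.
Proof.
move=> Hd E; split.
  by have := congr1 (fun k => par k [:: false]) E; rewrite /= !par_ee.
by have := congr1 (fun k => par k [:: true]) E; rewrite /= !par_ee.
Qed.

Lemma kerM d (Hd : 1 < d) (k : {perm word d}) :
  (k \in 'ker (phiM Hd)) = [&& k \in K d, ~~ par k [:: false] & ~~ par k [:: true]].
Proof.
apply/idP/idP.
  move=> Hk; have HkK := dom_ker Hk; move/kerP: Hk => /(_ HkK) /= E.
  rewrite HkK /=; have E1 : ee d (par k [:: false]) (par k [:: true]) = ee d false false.
    by move: E; rewrite /phiK => ->; rewrite /ee !expg0 mulg1.
  by case: (ee_inj Hd E1) => -> ->.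
case/and3P => HkK H0 H1; apply/kerP => //=.
by rewrite /phiK (negbTE H0) (negbTE H1) /ee !expg0 mulg1.
Qed.

Lemma card_ker d (Hd : 1 < d) : #|K d : 'ker (phiM Hd)| = 4.
Proof.
have := card_morphim (phiM Hd) (K d); rewrite setIid => <-.
rewrite morphimEdom.
have -> : phiM Hd @: K d = [set ee d b.1 b.2 | b : bool * bool].
  apply/setP => x; apply/imsetP/imsetP => [[k Hk ->]|[b _ ->]].
    by exists (par k [:: false], par k [:: true]).
  exists (ee d b.1 b.2); first exact: ee_K.
  by rewrite /= /phiK !par_ee.
rewrite card_imset; first by rewrite card_prod card_bool.
by move=> [b0 b1] [c0 c1] /= /(ee_inj Hd) [-> ->].
Qed.

Lemma restr_val d (g : {perm word d}) (w : word d.-1) : g \in G d ->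
  wval (restr d.-1 g w) = wval (g (mkw d (wval w))).
Proof.
move=> Hg; have Hw : size (wval w) <= d by apply: leq_trans (size_wval w) (leq_pred _).
rewrite /restr wval_mkw // G_size // wval_mkw //; exact: size_wval.
Qed.

Lemma restr_inj d (g : {perm word d}) : g \in G d -> injective (restr d.-1 g).
Proof.
move=> Hg w1 w2 E; have := congr1 (@wval _) E; rewrite !restr_val // => /wval_inj /perm_inj.
move/mkw_inj; rewrite !(leq_trans (size_wval _) (leq_pred _)) => /(_ isT isT).
exact: wval_inj.
Qed.

Definition rperm d (g : {perm word d}) (Hg : g \in G d) : {perm word d.-1} := perm (restr_inj Hg).

Lemma rperm_G d (g : {perm word d}) (Hg : g \in G d) : rperm Hg \in G d.-1.
Proof.
apply/inGP => w; apply: wval_inj; rewrite !permE wval_parent !restr_val //.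
have Hw : size (wval w) <= d := leq_trans (size_wval w) (leq_pred _).
have -> : mkw d (wval (wparent w)) = wparent (mkw d (wval w)).
  apply: wval_inj; rewrite !wval_parent !wval_mkw //.
  by rewrite size_take; case: ifP => // _; apply: leq_trans (leq_pred _) Hw.
by move/inGP: Hg => ->; rewrite wval_parent.
Qed.

Lemma decomp d (P : {group {perm word d}}) g : P \subset G d -> pattern P d.-1 = G d.-1 ->
  g \in G d -> exists2 p, p \in P & p^-1 * g \in K d.
Proof.
move=> HPG Hpat Hg; have := rperm_G Hg; rewrite -Hpat inE => /existsP [p /andP [Hp /forallP Hw]].
exists p => //; have HpG : p \in G d by apply: (subsetP HPG).
apply/inKP; split; first by rewrite groupM ?groupV.
move=> w Hws; rewrite permM.
set u := p^-1 w.
have Hu : size (wval u) <= d.-1 by rewrite G_size ?groupV //; lia.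
have := Hw (mkw d.-1 (wval u)); rewrite permE => /eqP /(congr1 (@wval _)).
rewrite !restr_val // wval_mkw // wvalK => /wval_inj ->.
by rewrite /u -permM mulVg perm1.
Qed.

Lemma N_normK d (P : {group {perm word d}}) : 1 < d -> P \subset G d ->
  pattern P d.-1 = G d.-1 -> normK (K_group d :&: P)%G.
Proof.
move=> Hd HPG Hpat; split; first exact: subsetIl.
move=> x h /setIP [HxK HxP] Hh.
have [p Hp Hk] := decomp HPG Hpat Hh.
have HpG : p \in G d by apply: (subsetP HPG).
have -> : h = p * (p^-1 * h) by rewrite mulKVg.
rewrite conjgM.
have Hxp : x ^ p \in K d by apply: K_conj.
have -> : (x ^ p) ^ (p^-1 * h) = x ^ p.
  by rewrite conjgE (K_comm _ Hxp Hk) ?mulKg //; lia.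
by rewrite /= inE Hxp groupJ.
Qed.

Lemma P1_sub d (Hd : 1 < d) (N : {group {perm word d}}) : Q N 1 -> 'ker (phiM Hd) \subset N.
Proof.
move=> HQ; apply/subsetP => k; rewrite kerM => /and3P [HkK H0 H1].
apply: HQ => // y; case: y => [|b [|]] //= _.
by case: b; apply/negbTE.
Qed.

Lemma c0_in d (Hd : 1 < d) (N : {group {perm word d}}) : normK N ->
  'ker (phiM Hd) \subset N -> forall g, g \in N ->
  par g [:: false] || par g [:: true] -> c0 d \in N.
Proof.
move=> [HNK HNJ] Hsub.
have Hd0 : 0 < d by lia.
have Both : forall g, g \in N -> par g [:: false] -> par g [:: true] -> c0 d \in N.
  move=> g Hg H0 H1; have HgK : g \in K d by apply: (subsetP HNK).
  have Hgc : g * c0 d \in N.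
    apply: (subsetP Hsub); rewrite kerM groupM ?c0_K //=.
    by rewrite !(par_mul _ Hd0 HgK (c0_K d)) !par_c0 // H0 H1.
  by rewrite -(mulKg g (c0 d)) groupM ?groupV.
move=> g Hg; have HgK : g \in K d by apply: (subsetP HNK).
case E0: (par g [:: false]); case E1: (par g [:: true]) => //= _.
- exact: (Both g).
- have Hh : g * g ^ a d 0 \in N by rewrite groupM ?HNJ ?a_G.
  apply: (Both _ Hh); rewrite par_mul ?K_conj ?a_G // par_conj_a //;
    try (simpl; lia); rewrite /= /psi eqxx /= ?E0 ?E1 //.
- have Hh : g * g ^ a d 0 \in N by rewrite groupM ?HNJ ?a_G.
  apply: (Both _ Hh); rewrite par_mul ?K_conj ?a_G // par_conj_a //;
    try (simpl; lia); rewrite /= /psi eqxx /= ?E0 ?E1 //.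
Qed.

Lemma exists_odd d (k : {perm word d}) (b : bool) : par k [:: b] = true ->
  forall j, 0 < j <= d.-1 -> exists2 z : seq bool, size z = j & par k z = true.
Proof.
move=> Hb; elim=> [|j IH] // /andP [_ Hj].
case: j IH Hj => [|j] IH Hj; first by exists [:: b].
have [z Hz Hpz] := IH ltac:(lia).
move: Hpz; rewrite par_split; last by rewrite Hz; lia.
case E: (par k (rcons z false)) => /= H.
  by exists (rcons z false); rewrite ?size_rcons ?Hz.
by exists (rcons z true); rewrite ?size_rcons ?Hz // -H.
Qed.

Lemma W_c1 d (N : {group {perm word d}}) : 1 < d -> normK N -> c1 d \in N ->
  forall j, 0 < j -> j < d.-1 -> exists2 f', f' \in N &
     exists2 z, size z = j & forall y, size y = j.+1 -> par f' y = prefix z y.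
Proof.
move=> Hd HN Hc j Hj0 Hj.
case: (ltnP 1 j) => Hj1.
  have Hd0 : 0 < d by lia.
  have Hs : size (nseq j false) < d.-1 by rewrite size_nseq.
  have [f' Hf' Hp] := Gen1 Hd0 HN Hc Hs (par_c1_0j Hj1 Hj).
  by exists f' => //; exists (nseq j false); rewrite ?size_nseq // => y Hy; apply: Hp; rewrite size_nseq.
have -> : j = 1%N by lia.
exists (c1 d) => //; exists [:: false] => // y Hy; apply: par_c1_2 => //; lia.
Qed.

Lemma W_odd d (N : {group {perm word d}}) k (b : bool) : 1 < d -> normK N -> k \in N ->
  par k [:: b] = true ->
  forall j, 0 < j -> j < d.-1 -> exists2 f', f' \in N &
     exists2 z, size z = j & forall y, size y = j.+1 -> par f' y = prefix z y.
Proof.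
move=> Hd HN Hk Hb j Hj0 Hj.
have Hjj : 0 < j <= d.-1 by apply/andP; split; lia.
have [z Hz Hpz] := exists_odd Hb Hjj.
have Hd0 : 0 < d by lia.
have Hs : size z < d.-1 by rewrite Hz.
have [f' Hf' Hp] := Gen1 Hd0 HN Hk Hs Hpz.
by exists f' => //; exists z => // y Hy; apply: Hp; rewrite Hz.
Qed.

Local Close Scope group_scope.

Theorem mainTheorem15 (d : nat) (P : {group {perm word d}}) :
  2 <= d ->
  P \subset G d ->
  essential P ->
  pattern P d.-1 = G d.-1 ->
  (([~ a d 1, a d d.-1] \in P)%g /\ ([~ a d 0, a d d.-1] \notin P)%g)
  <-> #|G d : P|%g = 4.
Proof.
move=> Hd HPG _ Hpat.
change [~ a d 1, a d d.-1]%g with (c1 d); change [~ a d 0, a d d.-1]%g with (c0 d).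
have Hd0 : 0 < d by lia.
have Hidx : #|G d : P|%g = #|K d : P|%g.
  have E : G d = (P * K d)%g.
    apply/eqP; rewrite eqEsubset; apply/andP; split; last first.
      by rewrite (@mulG_subG _ P (K_group d) (G_group d)) HPG K_sub.
    apply/subsetP => g Hg.
    have [p Hp Hk] := decomp HPG Hpat Hg.
    by rewrite -(mulKVg p g) mem_mulg.
  by rewrite E indexMg.
rewrite Hidx.
pose N := (K_group d :&: P)%G.
have HN : normK N by apply: N_normK.
have HL : (#|N| * #|K d : P|%g)%N = #|K d| by apply: (LagrangeI (K_group d) P).
pose P1 := ('ker (phiM Hd))%G.
have HP1K : P1 \subset K d by apply/subsetP => x; apply: dom_ker.
have HP1 : (#|P1| * 4)%N = #|K d|.
  have := LagrangeI (K_group d) P1; rewrite (setIidPr HP1K) card_ker //.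
have HNP : forall x, x \in K d -> (x \in N) = (x \in P).
  by move=> x Hx; rewrite /N /= inE Hx.
have Hc1P1 : c1 d \in P1 by rewrite kerM c1_K !par_c1.
have Hc0P1 : c0 d \notin P1 by rewrite kerM c0_K !par_c0.
split.
  case=> Hc1 Hc0.
  have Hc1N : c1 d \in N by rewrite HNP ?c1_K.
  have Hsub : P1 \subset N by apply: P1_sub; apply: Desc => //; apply: W_c1.
  have Hsub2 : N \subset P1.
    apply/subsetP => k Hk; have HkK : k \in K d by apply: (subsetP (proj1 HN)).
    rewrite kerM HkK /=; apply/negP => Hn.
    have Hor : par k [:: false] || par k [:: true].
      by move: Hn; case: (par k [:: false]); case: (par k [:: true]).
    have := c0_in HN Hsub Hk Hor; rewrite HNP ?c0_K //.
    by move: Hc0 => /negP.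
  have EN : N :=: P1 by apply/eqP; rewrite eqEsubset Hsub2 Hsub.
  apply/eqP; rewrite -(eqn_pmul2l (cardG_gt0 P1)) -{1}EN HL -HP1 mulnC.
  done.
move=> H4.
have HNsub : N \subset P1.
  apply/subsetP => k Hk; have HkK : k \in K d by apply: (subsetP (proj1 HN)).
  apply/negPn/negP => Hn.
  have Hor : exists b : bool, par k [:: b] = true.
    move: Hn; rewrite kerM HkK /=.
    case E0: (par k [:: false]); first by exists false.
    case E1: (par k [:: true]); first by exists true.
    done.
  case: Hor => b Hb.
  have Hsub : P1 \subset N by apply: P1_sub; apply: Desc => //; apply: W_odd Hk Hb.
  have Hpr : P1 \proper N by apply/properP; split => //; exists k.
  have := proper_card Hpr.
  have : (#|N| * 4 = #|P1| * 4)%N by rewrite -{1}H4 HL HP1.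
  move/eqP; rewrite eqn_pmul2r // => /eqP ->.
  by rewrite ltnn.
have EN : N :=: P1.
  apply/eqP; rewrite eqEcard HNsub /=.
  have : (#|N| * 4 = #|P1| * 4)%N by rewrite -{1}H4 HL HP1.
  by move/eqP; rewrite eqn_pmul2r // => /eqP ->.
split.
  by rewrite -HNP ?c1_K // EN.
by rewrite -HNP ?c0_K // EN.
Qed.
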